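(* Let $a,b,e\in\mathbb{R}$ with $b\ne0$, and let $\alpha_i(t)$ ($i=1,\dots,4$) be scalar continuous functions (not necessarily odd). (i) Suppose $b\alpha_1(t)+\alpha_3(t)$ is $2\pi/|b|$-periodic, $a(a+e)<0$, and $\int_0^{2\pi/b}(b\alpha_1(s)+\alpha_3(s))\,ds=0$. Then the solution $$x(t)=\sqrt{-a(a+e)}\sin\Big(bt+\int_0^t(b\alpha_1(s)+\alpha_3(s))ds\Big),\ y(t)=\sqrt{-a(a+e)}\cos\Big(bt+\int_0^t(b\alpha_1(s)+\alpha_3(s))ds\Big),\ z(t)=-a$$ of the system $$\begin{aligned}\dot x&=(ax+by+xz)(1+\alpha_1(t))+x(a+z)\alpha_2(t)+y\alpha_3(t),\\ \dot y&=(-bx+ay+yz)(1+\alpha_1(t))+y(a+z)\alpha_2(t)-x\alpha_3(t),\\ \dot z&=(ez-x^2-y^2-z^2)(1+\alpha_1(t)+\alpha_2(t))\end{aligned}$$ is $2\pi/|b|$-periodic (the period not necessarily minimal). (ii) Suppose $b\alpha_1(t)+\alpha_3(t)+a^4\alpha_4(t)$ is $2\pi/|b|$-periodic and $\int_0^{2\pi/b}(b\alpha_1(s)+\alpha_3(s)+a^4\alpha_4(s))\,ds=0$. Then the solution $$x(t)=a\sin\Big(bt+\int_0^t(b\alpha_1(s)+\alpha_3(s)+a^4\alpha_4(s))ds\Big),\ y(t)=a\cos\Big(bt+\int_0^t(b\alpha_1(s)+\alpha_3(s)+a^4\alpha_4(s))ds\Big),\ z(t)=-a$$ of the system $$\begin{aligned}\dot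 x&=(ax+by+xz)(1+\alpha_1(t))+x(a+z)\alpha_2(t)+y\alpha_3(t)-y(x^2+y^2)(4az+x^2+y^2+2z^2)\alpha_4(t),\\ \dot y&=(-bx+ay+yz)(1+\alpha_1(t))+y(a+z)\alpha_2(t)-x\alpha_3(t)+x(x^2+y^2)(4az+x^2+y^2+2z^2)\alpha_4(t),\\ \dot z&=-(2az+x^2+y^2+z^2)(1+\alpha_1(t)+\alpha_2(t))\end{aligned}$$ is $2\pi/|b|$-periodic (the period not necessarily minimal). *)

(* Defs.v *)
From Stdlib Require Import Reals.
From Coquelicot Require Import Coquelicot.
Open Scope R_scope.

Definition periodic (f : R -> R) (T : R) : Prop := forall t, f (t + T) = f t.

Definition F1x (a b : R) (al1 al2 al3 : R -> R) (t x y z : R) : R :=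
  (a*x + b*y + x*z) * (1 + al1 t) + x*(a + z) * al2 t + y * al3 t.
Definition F1y (a b : R) (al1 al2 al3 : R -> R) (t x y z : R) : R :=
  (-b*x + a*y + y*z) * (1 + al1 t) + y*(a + z) * al2 t - x * al3 t.
Definition F1z (e : R) (al1 al2 : R -> R) (t x y z : R) : R :=
  (e*z - x^2 - y^2 - z^2) * (1 + al1 t + al2 t).

Definition F2x (a b : R) (al1 al2 al3 al4 : R -> R) (t x y z : R) : R :=
  (a*x + b*y + x*z) * (1 + al1 t) + x*(a + z) * al2 t + y * al3 t
  - y * (x^2 + y^2) * (4*a*z + x^2 + y^2 + 2*z^2) * al4 t.
Definition F2y (a b : R) (al1 al2 al3 al4 : R -> R) (t x y z : R) : R :=
  (-b*x + a*y + y*z) * (1 + al1 t) + y*(a + z) * al2 t - x * al3 t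
  + x * (x^2 + y^2) * (4*a*z + x^2 + y^2 + 2*z^2) * al4 t.
Definition F2z (a : R) (al1 al2 : R -> R) (t x y z : R) : R :=
  - (2*a*z + x^2 + y^2 + z^2) * (1 + al1 t + al2 t).

Definition g1 (b : R) (al1 al3 : R -> R) (s : R) : R := b * al1 s + al3 s.
Definition g2 (a b : R) (al1 al3 al4 : R -> R) (s : R) : R :=
  b * al1 s + al3 s + a^4 * al4 s.
Definition phase (b : R) (g : R -> R) (t : R) : R := b * t + RInt g 0 t.

Definition sol1x a b e al1 al3 (t : R) : R :=
  sqrt (- (a*(a+e))) * sin (phase b (g1 b al1 al3) t).
Definition sol1y a b e al1 al3 (t : R) : R :=
  sqrt (- (a*(a+e))) * cos (phase b (g1 b al1 al3) t).
Definition sol2x a b al1 al3 al4 (t : R) : R :=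
  a * sin (phase b (g2 a b al1 al3 al4) t).
Definition sol2y a b al1 al3 al4 (t : R) : R :=
  a * cos (phase b (g2 a b al1 al3 al4) t).
Definition solz (a : R) (t : R) : R := - a.

(* Main.v *)
Require Import Defs.
From Stdlib Require Import Reals Lra.
From Coquelicot Require Import Coquelicot.
Open Scope R_scope.

Lemma der_eq (f : R -> R) (x d d' : R) : is_derive f x d -> d = d' -> is_derive f x d'.
Proof. intros H ->; exact H. Qed.

Lemma exR (g : R -> R) a c : (forall t, continuous g t) -> ex_RInt g a c.
Proof. intros H; apply (@ex_RInt_continuous R_CompleteNormedModule); intros; apply H. Qed.

Lemma der_phase b (g : R -> R) t : (forall t, continuous g t) ->
  is_derive (phase b g) t (b + g t).
Proof.
  intros Hg. unfold phase.
  apply (is_derive_plus (fun t => b * t) (fun t => RInt g 0 t)).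
  - apply der_eq with (b * one). apply is_derive_scal, (@is_derive_id R_AbsRing).
    unfold one; simpl; ring.
  - apply is_derive_RInt with 0.
    + apply filter_forall; intros; apply (@RInt_correct R_CompleteNormedModule), exR, Hg.
    + apply Hg.
Qed.

Lemma der_sin b (g:R->R) t : (forall t, continuous g t) ->
  is_derive (fun t => sin (phase b g t)) t (cos (phase b g t) * (b + g t)).
Proof.
  intros Hg. eapply der_eq. apply is_derive_comp. apply is_derive_sin.
  apply der_phase; auto. simpl. unfold scal; simpl; unfold mult; simpl; ring.
Qed.

Lemma der_cos b (g:R->R) t : (forall t, continuous g t) ->
  is_derive (fun t => cos (phase b g t)) t (- sin (phase b g t) * (b + g t)).
Proof.
  intros Hg. eapply der_eq. apply is_derive_comp. apply is_derive_cos.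
  apply der_phase; auto. simpl. unfold scal; simpl; unfold mult; simpl; ring.
Qed.

Lemma RInt_per (g:R->R) T t : (forall t, continuous g t) -> periodic g T ->
  RInt g 0 (t + T) = RInt g 0 t + RInt g 0 T.
Proof.
  intros Hg Hp.
  rewrite <- (RInt_Chasles g 0 T (t+T)) by apply exR, Hg.
  assert (RInt g T (t + T) = RInt g 0 t) as ->.
  { assert (E := RInt_comp_lin g 1 T 0 t).
    replace (1*0+T) with T in E by ring. replace (1*t+T) with (t+T) in E by ring.
    rewrite <- E by apply exR, Hg.
    apply RInt_ext; intros x _. unfold scal; simpl; unfold mult; simpl; rewrite Rmult_1_l.
    replace (1*x+T) with (x+T) by ring. apply Hp. }
  simpl; unfold plus; simpl; ring.
Qed.

Lemma RInt_zero b (g:R->R) : b <> 0 -> (forall t, continuous g t) -> periodic g (2*PI/Rabs b) ->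
  RInt g 0 (2*PI/b) = 0 -> RInt g 0 (2*PI/Rabs b) = 0.
Proof.
  intros hb Hg Hp H0. destruct (Rcase_abs b) as [Hn|Hn].
  - rewrite (Rabs_left b Hn) in *.
    assert (E := RInt_per g (2*PI/-b) (-(2*PI/ - b)) Hg Hp).
    replace (-(2*PI/ - b) + 2*PI/ - b) with 0 in E by ring.
    replace (-(2*PI/ - b)) with (2*PI/b) in E by (field; auto).
    rewrite RInt_point, H0 in E. simpl in E; unfold zero in E; simpl in E. lra.
  - rewrite Rabs_right by lra. exact H0.
Qed.

Lemma phase_per b (g:R->R) t : b <> 0 -> (forall t, continuous g t) -> periodic g (2*PI/Rabs b) ->
  RInt g 0 (2*PI/b) = 0 ->
  sin (phase b g (t + 2*PI/Rabs b)) = sin (phase b g t) /\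
  cos (phase b g (t + 2*PI/Rabs b)) = cos (phase b g t).
Proof.
  intros hb Hg Hp H0. unfold phase. rewrite RInt_per; auto.
  rewrite (RInt_zero b g); auto.
  assert (b * (2*PI/Rabs b) = 2*PI \/ b * (2*PI/Rabs b) = - (2*PI)) as [E|E].
  { destruct (Rcase_abs b) as [Hn|Hn].
    - right. rewrite Rabs_left by auto. field; auto.
    - left. rewrite Rabs_right by lra. field; auto. }
  all: replace (b * (t + 2 * PI / Rabs b) + (RInt g 0 t + 0)) with
        ((b * t + RInt g 0 t) + b * (2*PI/Rabs b)) by ring; rewrite E.
  all: set (u := b * t + RInt g 0 t); rewrite sin_plus, cos_plus; try rewrite sin_neg, cos_neg;
       rewrite sin_2PI, cos_2PI; split; ring.
Qed.

Lemma cplus (f g : R -> R) t : continuous f t -> continuous g t ->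
  continuous (fun s => f s + g s) t.
Proof. intros; apply (continuous_plus f g); auto. Qed.
Lemma cscal (k : R) (f : R -> R) t : continuous f t ->
  continuous (fun s => k * f s) t.
Proof. intros; apply (continuous_mult (fun _ => k) f); auto. apply continuous_const. Qed.

Theorem theorem5 (a b e : R) (al1 al2 al3 al4 : R -> R)
  (hb : b <> 0)
  (hc1 : forall t, continuous al1 t) (hc2 : forall t, continuous al2 t)
  (hc3 : forall t, continuous al3 t) (hc4 : forall t, continuous al4 t) :
  (* part (i) *)
  (periodic (g1 b al1 al3) (2 * PI / Rabs b) ->
   a * (a + e) < 0 ->
   RInt (g1 b al1 al3) 0 (2 * PI / b) = 0 ->
   (forall t,
      is_derive (sol1x a b e al1 al3) t
        (F1x a b al1 al2 al3 t (sol1x a b e al1 al3 t) (sol1y a b e al1 al3 t) (solz a t)) /\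
      is_derive (sol1y a b e al1 al3) t
        (F1y a b al1 al2 al3 t (sol1x a b e al1 al3 t) (sol1y a b e al1 al3 t) (solz a t)) /\
      is_derive (solz a) t
        (F1z e al1 al2 t (sol1x a b e al1 al3 t) (sol1y a b e al1 al3 t) (solz a t))) /\
   periodic (sol1x a b e al1 al3) (2 * PI / Rabs b) /\
   periodic (sol1y a b e al1 al3) (2 * PI / Rabs b) /\
   periodic (solz a) (2 * PI / Rabs b))
  /\
  (* part (ii) *)
  (periodic (g2 a b al1 al3 al4) (2 * PI / Rabs b) ->
   RInt (g2 a b al1 al3 al4) 0 (2 * PI / b) = 0 ->
   (forall t,
      is_derive (sol2x a b al1 al3 al4) t
        (F2x a b al1 al2 al3 al4 t (sol2x a b al1 al3 al4 t) (sol2y a b al1 al3 al4 t) (solz a t)) /\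
      is_derive (sol2y a b al1 al3 al4) t
        (F2y a b al1 al2 al3 al4 t (sol2x a b al1 al3 al4 t) (sol2y a b al1 al3 al4 t) (solz a t)) /\
      is_derive (solz a) t
        (F2z a al1 al2 t (sol2x a b al1 al3 al4 t) (sol2y a b al1 al3 al4 t) (solz a t))) /\
   periodic (sol2x a b al1 al3 al4) (2 * PI / Rabs b) /\
   periodic (sol2y a b al1 al3 al4) (2 * PI / Rabs b) /\
   periodic (solz a) (2 * PI / Rabs b)).
Proof.
  assert (Hg1 : forall t, continuous (g1 b al1 al3) t).
  { intros t. unfold g1. apply (cplus (fun s => b*al1 s) al3); auto. apply cscal; auto. }
  assert (Hg2 : forall t, continuous (g2 a b al1 al3 al4) t).
  { intros t. unfold g2. apply (cplus (fun s => b*al1 s + al3 s) (fun s => a^4 * al4 s)).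
    apply (cplus (fun s => b*al1 s) al3); auto. apply cscal; auto. apply cscal; auto. }
  split.
  - intros Hp Hae H0.
    set (r := sqrt (- (a*(a+e)))).
    assert (Hr : r * r = - (a*(a+e))) by (unfold r; apply (sqrt_sqrt (- (a*(a+e)))); lra).
    split; [|split; [|split]].
    + intros t. set (th := phase b (g1 b al1 al3) t).
      assert (Hsc : sin th ^ 2 + cos th ^ 2 = 1) by (pose proof (sin2_cos2 th) as E; unfold Rsqr in E; lra).
      split; [|split].
      * eapply der_eq. apply is_derive_scal, der_sin; auto.
        unfold F1x, sol1x, sol1y, solz, g1. fold r. fold th. ring.
      * eapply der_eq. apply is_derive_scal, der_cos; auto.
        unfold F1y, sol1x, sol1y, solz, g1. fold r. fold th. ring.
      * eapply der_eq. apply is_derive_const.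
        unfold F1z, sol1x, sol1y, solz. fold r. fold th.
        replace (e * - a - (r * sin th) ^ 2 - (r * cos th) ^ 2 - (- a) ^ 2) with
          (e * - a - (r*r) * (sin th ^ 2 + cos th ^ 2) - a^2) by ring.
        rewrite Hr, Hsc. simpl; unfold zero; simpl; ring.
    + intros t. unfold sol1x. destruct (phase_per b (g1 b al1 al3) t hb Hg1 Hp H0) as [E _].
      rewrite E; reflexivity.
    + intros t. unfold sol1y. destruct (phase_per b (g1 b al1 al3) t hb Hg1 Hp H0) as [_ E].
      rewrite E; reflexivity.
    + intros t; reflexivity.
  - intros Hp H0.
    split; [|split; [|split]].
    + intros t. set (th := phase b (g2 a b al1 al3 al4) t).
      assert (Hsc : sin th ^ 2 + cos th ^ 2 = 1) by (pose proof (sin2_cos2 th) as E; unfold Rsqr in E; lra).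
      assert (Hxy : (a * sin th) ^ 2 + (a * cos th) ^ 2 = a ^ 2).
      { replace ((a * sin th) ^ 2 + (a * cos th) ^ 2) with (a^2 * (sin th ^ 2 + cos th ^ 2)) by ring.
        rewrite Hsc; ring. }
      split; [|split].
      * eapply der_eq. apply is_derive_scal, der_sin; auto.
        unfold F2x, sol2x, sol2y, solz. fold th.
        replace (4 * a * - a + (a * sin th) ^ 2 + (a * cos th) ^ 2 + 2 * (- a) ^ 2) with
          (4 * a * - a + ((a * sin th) ^ 2 + (a * cos th) ^ 2) + 2 * (- a) ^ 2) by ring.
        rewrite Hxy. unfold g2. ring.
      * eapply der_eq. apply is_derive_scal, der_cos; auto.
        unfold F2y, sol2x, sol2y, solz. fold th.
        replace (4 * a * - a + (a * sin th) ^ 2 + (a * cos th) ^ 2 + 2 * (- a) ^ 2) with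
          (4 * a * - a + ((a * sin th) ^ 2 + (a * cos th) ^ 2) + 2 * (- a) ^ 2) by ring.
        rewrite Hxy. unfold g2. ring.
      * eapply der_eq. apply is_derive_const.
        unfold F2z, sol2x, sol2y, solz. fold th.
        replace (2 * a * - a + (a * sin th) ^ 2 + (a * cos th) ^ 2 + (- a) ^ 2) with
          (2 * a * - a + ((a * sin th) ^ 2 + (a * cos th) ^ 2) + (- a) ^ 2) by ring.
        rewrite Hxy. simpl; unfold zero; simpl; ring.
    + intros t. unfold sol2x. destruct (phase_per b (g2 a b al1 al3 al4) t hb Hg2 Hp H0) as [E _].
      rewrite E; reflexivity.
    + intros t. unfold sol2y. destruct (phase_per b (g2 a b al1 al3 al4) t hb Hg2 Hp H0) as [_ E].
      rewrite E; reflexivity.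
    + intros t; reflexivity.
Qed.
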